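(* Assume (A1). Let $g:\mathcal X\to\{0,1\}$ and let $u$ be the solution of problem (P) with boundary data $g|_\Gamma$. Let $k$ be the smallest integer strictly larger than $$\frac{2\log 2}{1-\alpha+2\alpha\delta}=\frac{2(p-1)\log 2}{p-2+2\delta}.$$ Then every $x\in\mathcal X\setminus A_k$ is classified correctly, i.e. $g(x)=\mathbb 1_{u(x)\ge 1/2}$.
   Context: $\mathcal X$ is a finite vertex set and $W=(w_{xy})$ a symmetric matrix of nonnegative weights defining a connected graph, with degrees $d_x=\sum_{y}w_{xy}$ and neighbor sets $N_x=\{y\in\mathcal X:w_{xy}>0\}$. For $p\ge2$, $\alpha=1/(p-1)$, and $$\mathcal L_p u(x)=\alpha\,\frac{1}{d_x}\sum_{y}w_{xy}\big(u(x)-u(y)\big)+(1-\alpha)\Big(u(x)-\tfrac12\big(\max_{N_x}u+\min_{N_x}u\big)\Big).$$ $\Gamma\subset\mathcal X$ is the set of labeled vertices. Problem (P): find $u:\mathcal X\to\mathbb R$ with $\mathcal L_pu(x)=0$ for $x\in\mathcal X\setminus\Gamma$ and $u=g$ on $\Gamma$; it has a unique solution. Assumption (A1): $\Gamma\cap N_x\neq\varnothing$ for every $x\in\mathcal X$. $\delta=\min_{x\in\mathcal X}\frac{\sum_{y}w_{xy}\mathbb 1_{y\in\Gamma}}{\sum_{z}w_{xz}}$. The graph distance $\operatorname{dist}(x,y)$ is the number of edges of a shortest path from $x$ to $y$, and $\operatorname{dist}(x,A)=\min_{y\in A}\operatorname{dist}(x,y)$ (taken to be $+\infty$ if $A=\varnothing$).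 For $i=0,1$ let $\mathcal X_i=\{x\in\mathcal X:g(x)=i\}$, and for an integer $m\ge0$, $A_m^i=\{x\in\mathcal X_i:\operatorname{dist}(x,\mathcal X_{1-i})\le m\}$, $A_m=A_m^0\cup A_m^1$. *)

(* Defs.v *)
From HB Require Import structures.
From mathcomp Require Import all_boot all_order all_algebra.
From mathcomp Require Import all_classical all_reals all_analysis.
Set Implicit Arguments. Unset Strict Implicit. Unset Printing Implicit Defensive.
Import Order.TTheory GRing.Theory Num.Theory.
Local Open Scope ring_scope.

Section GraphDefs.
Variables (R : realType) (X : finType) (W : X -> X -> R).

Definition edge : rel X := fun x y => 0 < W x y.

Definition deg (x : X) : R := \sum_(y : X) W x y.

Definition connected_graph : Prop := forall x y : X, connect edge x y.

Definition nbr0 (x : X) : X := odflt x [pick y | edge x y].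

(* max_{N_x} u and min_{N_x} u (the default value is the value at a
   neighbour, so these are the genuine max/min whenever N_x is nonempty) *)
Definition nbr_max (u : X -> R) (x : X) : R :=
  \big[Num.max/u (nbr0 x)]_(y | edge x y) u y.
Definition nbr_min (u : X -> R) (x : X) : R :=
  \big[Num.min/u (nbr0 x)]_(y | edge x y) u y.

Definition Lp (p : R) (u : X -> R) (x : X) : R :=
  let alpha := 1 / (p - 1) in
  alpha * (1 / deg x) * \sum_(y : X) W x y * (u x - u y)
  + (1 - alpha) * (u x - (nbr_max u x + nbr_min u x) / 2).

Definition solves_P (p : R) (Gamma : {set X}) (gb : X -> R) (u : X -> R) : Prop :=
  (forall x, x \notin Gamma -> Lp p u x = 0) /\ (forall x, x \in Gamma -> u x = gb x).

Definition A1 (Gamma : {set X}) : Prop :=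
  forall x : X, exists y, (y \in Gamma) && edge x y.

(* delta = min_x (sum_y w_xy 1_{y in Gamma}) / (sum_z w_xz).
   The big min uses 1 as neutral element; every ratio is <= 1, so for a
   nonempty vertex set this is exactly the minimum. *)
Definition delta (Gamma : {set X}) : R :=
  \big[Num.min/1]_(x : X) ((\sum_(y in Gamma) W x y) / deg x).

Definition dist_le (m : nat) (x y : X) : Prop :=
  exists s : seq X, [/\ path edge x s, (size s <= m)%N & last x s = y].

(* x \in A_m : with i := g x, x in X_i and dist(x, X_{1-i}) <= m *)
Definition in_A (g : X -> bool) (m : nat) (x : X) : Prop :=
  exists y : X, g y = ~~ g x /\ dist_le m x y.

End GraphDefs.

(* Main.v *)
Require Import Defs.
From HB Require Import structures.
From mathcomp Require Import all_boot all_order all_algebra.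
From mathcomp Require Import all_classical all_reals all_analysis.
From mathcomp Require Import ring lra.
Import Order.TTheory GRing.Theory Num.Theory.
Local Open Scope ring_scope.
Set Implicit Arguments. Unset Strict Implicit.

Lemma bigmax_ge (T : finType) (R : realType) (i0 : R) (P : pred T) (F : T -> R) j :
  P j -> F j <= \big[Num.max/i0]_(i | P i) F i.
Proof.
move=> Pj; rewrite -big_filter.
have : j \in seq.filter P (index_enum T) by rewrite mem_filter Pj mem_index_enum.
elim: (seq.filter P (index_enum T)) => //= a r IH.
rewrite in_cons big_cons => /orP [/eqP->|/IH H]; rewrite le_max ?lexx //.
by rewrite H orbT.
Qed.

Lemma bigmin_le (T : finType) (R : realType) (i0 : R) (P : pred T) (F : T -> R) j :
  P j -> \big[Num.min/i0]_(i | P i) F i <= F j.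
Proof.
move=> Pj; rewrite -big_filter.
have : j \in seq.filter P (index_enum T) by rewrite mem_filter Pj mem_index_enum.
elim: (seq.filter P (index_enum T)) => //= a r IH.
rewrite in_cons big_cons => /orP [/eqP->|/IH H]; rewrite ge_min ?lexx //.
by rewrite H orbT.
Qed.

Lemma bigmin_le_idx (T : finType) (R : realType) (i0 : R) (P : pred T) (F : T -> R) :
  \big[Num.min/i0]_(i | P i) F i <= i0.
Proof.
apply: (big_rec (fun x => x <= i0)) => // i x _ H.
by rewrite ge_min H orbT.
Qed.

Lemma bigmax_attained (T : finType) (R : realType) (F : T -> R) (x0 : T) :
  exists y, forall z, F z <= F y.
Proof.
have [y Hy] : exists y, \big[Num.max/F x0]_(i : T) F i = F y.
  apply: (big_ind (fun m => exists y, m = F y)).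
  - by exists x0.
  - move=> a b [y1 ->] [y2 ->]; rewrite /Order.max; case: ifP => _.
      by exists y2.
    by exists y1.
  - by move=> i _; exists i.
exists y => z; rewrite -Hy; exact: bigmax_ge.
Qed.

Lemma nbr0_edge (R : realType) (X : finType) (W : X -> X -> R) x z0 :
  edge W x z0 -> edge W x (nbr0 W x).
Proof.
move=> e; rewrite /nbr0; case: pickP => [y ey|H] //=.
by move: (H z0); rewrite e.
Qed.

Lemma W_zero (R : realType) (X : finType) (W : X -> X -> R) y z :
  (forall x y, 0 <= W x y) -> ~~ edge W y z -> W y z = 0.
Proof.
move=> HW ne; apply/eqP; rewrite eq_le HW andbT leNgt; exact: ne.
Qed.

Lemma deg_pos (R : realType) (X : finType) (W : X -> X -> R) y z0 :
  (forall x y, 0 <= W x y) -> edge W y z0 -> 0 < deg W y.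
Proof.
move=> HW e; apply: (lt_le_trans e); rewrite /deg (bigD1 z0) //= lerDl.
by apply: sumr_ge0 => z _.
Qed.

Lemma sumG_pos (R : realType) (X : finType) (W : X -> X -> R) (Gamma : {set X}) y z0 :
  (forall x y, 0 <= W x y) -> z0 \in Gamma -> edge W y z0 -> 0 < \sum_(z in Gamma) W y z.
Proof.
move=> HW zG e; apply: (lt_le_trans e); rewrite (bigD1 z0) //= lerDl.
by apply: sumr_ge0 => z _.
Qed.

Lemma max_principle (R : realType) (X : finType) (W : X -> X -> R) (Gamma : {set X})
  (h : X -> bool) (v : X -> R) (a : R) :
  (forall x y, 0 <= W x y) -> A1 W Gamma ->
  (forall y, y \in Gamma -> v y = (h y : nat)%:R) ->
  (forall y, y \notin Gamma -> forall B z0, (forall z, edge W y z -> v z <= B) ->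
     edge W y z0 ->
     v y <= a * ((\sum_z W y z * v z) / deg W y) + (1 - a) * ((B + v z0) / 2)) ->
  0 < a -> a <= 1 -> forall y, v y <= 1.
Proof.
move=> HW A1G Hv Hs a0 a1 y0.
have [y Hy] := bigmax_attained v y0.
apply: le_trans (Hy y0) _; rewrite leNgt; apply/negP => Hgt.
have yG : y \notin Gamma.
  by apply/negP => yG; move: Hgt; rewrite Hv //; case: (h y) => /=; lra.
have [z0 /andP[z0G ez0]] := A1G y.
have H := Hs y yG (v y) z0 (fun z _ => Hy z) ez0.
have vz0 : v z0 <= 1 by rewrite Hv //; case: (h z0) => /=; lra.
have dpos := deg_pos HW ez0.
have HS : \sum_z W y z * v z <= v y * deg W y - W y z0 * (v y - v z0).
  have : W y z0 * (v y - v z0) <= \sum_z (W y z * v y - W y z * v z).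
    rewrite (bigD1 z0) //= -mulrBr lerDl; apply: sumr_ge0 => z _.
    by rewrite -mulrBr; apply: mulr_ge0 => //; rewrite subr_ge0; exact: Hy.
  rewrite sumrB -mulr_suml /deg; lra.
set t := W y z0 * (v y - v z0) / deg W y.
have HSd : (\sum_z W y z * v z) / deg W y <= v y - t.
  rewrite ler_pdivrMr // /t mulrBl divfK ?gt_eqF //; lra.
have tpos : 0 < t.
  apply: divr_gt0 => //; apply: mulr_gt0; [exact: ez0| rewrite subr_gt0; lra].
have h1 := ler_wpM2l (ltW a0) HSd.
have h2 : (1 - a) * ((v y + v z0) / 2) <= (1 - a) * (v y).
  by apply: ler_wpM2l; lra.
have h3 : 0 < a * t by apply: mulr_gt0.
lra.
Qed.

Lemma decay (R : realType) (X : finType) (W : X -> X -> R) (Gamma : {set X})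
  (h : X -> bool) (v : X -> R) (a q : R) :
  (forall x y, 0 <= W x y) -> A1 W Gamma ->
  (forall y, y \in Gamma -> v y = (h y : nat)%:R) ->
  (forall y, y \notin Gamma -> forall B z0, (forall z, edge W y z -> v z <= B) ->
     edge W y z0 ->
     v y <= a * ((\sum_z W y z * v z) / deg W y) + (1 - a) * ((B + v z0) / 2)) ->
  (forall y, v y <= 1) ->
  0 <= a -> a <= 1 -> q = (1 - a + 2 * a * delta W Gamma) / 2 ->
  0 <= 1 - q ->
  forall j y, h y = false -> (forall z, h z = true -> ~ dist_le W j y z) ->
  v y <= (1 - q) ^+ j.
Proof.
move=> HW A1G Hv Hs Hle1 a0 a1 qE q1.
elim=> [|j IH] y hy Hno; first by rewrite expr0.
case: (boolP (y \in Gamma)) => yG.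
  by rewrite (Hv y yG) hy /=; apply: exprn_ge0.
set B := (1 - q) ^+ j.
have B0 : 0 <= B by apply: exprn_ge0.
have Hnb : forall z, edge W y z -> h z = false /\ v z <= B.
  move=> z e; have hz : h z = false.
    apply/negbTE/negP => hz; apply: (Hno z hz); exists [:: z]; split => //=.
    by rewrite e.
  split => //; apply: IH => // w hw [s [ps ss ls]]; apply: (Hno w hw).
  exists (z :: s); split => //=; first by rewrite e ps.
have [z0 /andP[z0G ez0]] := A1G y.
have dpos := deg_pos HW ez0.
have vz0 : v z0 = 0 by rewrite Hv // (Hnb z0 ez0).1.
have H := Hs y yG B z0 (fun z e => (Hnb z e).2) ez0.
rewrite vz0 addr0 in H.
have HS : \sum_z W y z * v z <= B * deg W y - B * \sum_(z in Gamma) W y z.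
  rewrite /deg mulr_sumr [X in _ - X]mulr_sumr [X in _ - X]big_mkcond /= -sumrB; apply: ler_sum => z _.
  case: (boolP (edge W y z)) => e; last first.
    by rewrite (W_zero HW e) mul0r mulr0; case: ifP; rewrite ?mulr0 ?subr0 ?subrr.
  have [hz vz] := Hnb z e.
  case: ifP => zG.
    by rewrite Hv // hz /= mulr0 subrr.
  by rewrite subr0 mulrC; apply: ler_wpM2r.
have Hdel : delta W Gamma * deg W y <= \sum_(z in Gamma) W y z.
  rewrite -ler_pdivlMr //; exact: (bigmin_le _ (fun x => (\sum_(y in Gamma) W x y) / deg W x) (isT : predT y)).
have HSd : (\sum_z W y z * v z) / deg W y <= B - B * delta W Gamma.
  rewrite ler_pdivrMr //; apply: (le_trans HS).
  have := ler_wpM2l B0 Hdel; lra.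
have h1 := ler_wpM2l a0 HSd.
rewrite exprS -/B qE.
lra.
Qed.

Unset Implicit Arguments.

Theorem mainTheorem6 (R : realType) (X : finType) (W : X -> X -> R)
  (p : R) (Gamma : {set X}) (g : X -> bool) (u : X -> R) (k : nat) :
  (forall x y, W x y = W y x) ->
  (forall x y, 0 <= W x y) ->
  connected_graph W ->
  2 <= p ->
  A1 W Gamma ->
  solves_P W p Gamma (fun x => (g x : nat)%:R) u ->
  let alpha := 1 / (p - 1) in
  let c := 2 * ln (2 : R) / (1 - alpha + 2 * alpha * delta W Gamma) in
  c < k%:R ->
  (forall m : nat, c < m%:R -> (k <= m)%N) ->
  forall x : X, ~ in_A W g k x -> g x = (1 / 2 <= u x).
Proof.
move=> Wsym HW conn p2 A1G [HL HG] alpha c Hck Hmin x Hnot.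
have a0 : 0 < alpha by rewrite /alpha; apply: divr_gt0; lra.
have a1 : alpha <= 1 by rewrite /alpha ler_pdivrMr; lra.
have Eq : forall y, y \notin Gamma ->
  u y = alpha * ((\sum_z W y z * u z) / deg W y)
        + (1 - alpha) * ((nbr_max W u y + nbr_min W u y) / 2).
  move=> y yG; have := HL y yG; rewrite /Lp /= -/alpha.
  have [z0 /andP[_ ez0]] := A1G y.
  have dpos := deg_pos HW ez0.
  have -> : \sum_z W y z * (u y - u z) = deg W y * u y - \sum_z W y z * u z.
    rewrite /deg mulr_suml -sumrB; apply: eq_bigr => z _; ring.
  have -> : alpha * (1 / deg W y) * (deg W y * u y - \sum_z W y z * u z)
     = alpha * u y - alpha * ((\sum_z W y z * u z) / deg W y).
    by field; rewrite gt_eqF.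
  lra.
have Hsu : forall y, y \notin Gamma -> forall B z0,
    (forall z, edge W y z -> u z <= B) -> edge W y z0 ->
    u y <= alpha * ((\sum_z W y z * u z) / deg W y) + (1 - alpha) * ((B + u z0) / 2).
  move=> y yG B z0 HB ez0; rewrite {1}(Eq y yG).
  have h1 : nbr_max W u y <= B.
    apply: (big_ind (fun m => m <= B)).
    - exact: HB (nbr0_edge ez0).
    - by move=> m1 m2 h1 h2; rewrite ge_max h1 h2.
    - exact: HB.
  have h2 : nbr_min W u y <= u z0 by exact: bigmin_le.
  have h3 : (1 - alpha) * ((nbr_max W u y + nbr_min W u y) / 2)
            <= (1 - alpha) * ((B + u z0) / 2) by apply: ler_wpM2l; lra.
  lra.
set v := fun y => 1 - u y.
have Hsv : forall y, y \notin Gamma -> forall B z0,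
    (forall z, edge W y z -> v z <= B) -> edge W y z0 ->
    v y <= alpha * ((\sum_z W y z * v z) / deg W y) + (1 - alpha) * ((B + v z0) / 2).
  move=> y yG B z0 HB ez0; rewrite /v {1}(Eq y yG).
  have dpos := deg_pos HW ez0.
  have h1 : 1 - B <= nbr_min W u y.
    apply: (big_ind (fun m => 1 - B <= m)).
    - have := HB _ (nbr0_edge ez0); rewrite /v; lra.
    - by move=> m1 m2 h1 h2; rewrite le_min h1 h2.
    - move=> z ez; have := HB z ez; rewrite /v; lra.
  have h2 : u z0 <= nbr_max W u y by exact: bigmax_ge.
  have h3 : (1 - alpha) * ((u z0 + (1 - B)) / 2)
            <= (1 - alpha) * ((nbr_max W u y + nbr_min W u y) / 2) by apply: ler_wpM2l; lra.
  have -> : (\sum_z W y z * (1 - u z)) / deg W y = 1 - (\sum_z W y z * u z) / deg W y.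
    have -> : \sum_z W y z * (1 - u z) = deg W y - \sum_z W y z * u z.
      rewrite /deg -sumrB; apply: eq_bigr => z _; ring.
    by field; rewrite gt_eqF.
  lra.
have Hvu : forall y, y \in Gamma -> u y = (g y : nat)%:R by move=> y yG; rewrite HG.
have Hvv : forall y, y \in Gamma -> v y = ((~~ g y) : nat)%:R.
  by move=> y yG; rewrite /v Hvu //; case: (g y) => /=; lra.
have Hu1 := max_principle HW A1G Hvu Hsu a0 a1.
have Hv1 := max_principle HW A1G Hvv Hsv a0 a1.
set q := (1 - alpha + 2 * alpha * delta W Gamma) / 2.
have dle1 : delta W Gamma <= 1 by exact: bigmin_le_idx.
have dpos : 0 < delta W Gamma.
  apply: (big_ind (fun m => 0 < m)) => //.
  - by move=> m1 m2 h1 h2; rewrite lt_min h1 h2.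
  - move=> y _; have [z0 /andP[z0G ez0]] := A1G y.
    exact: divr_gt0 (sumG_pos HW z0G ez0) (deg_pos HW ez0).
have q1 : 0 <= 1 - q.
  have := ler_wpM2l (ltW a0) dle1; rewrite /q; lra.
have qpos : 0 < q.
  have := mulr_gt0 a0 dpos; rewrite /q; lra.
have Hk : (1 - q) ^+ k < 1 / 2.
  have lnk : ln 2 < k%:R * q.
    move: Hck; rewrite /c ltr_pdivrMr; last by rewrite /q in qpos; lra.
    rewrite /q; lra.
  apply: (le_lt_trans (y := expR (- q) ^+ k)).
    apply: lerXn2r; rewrite ?nnegrE //.
    by have := expR_ge1Dx (- q); lra.
  rewrite -expRM_natl.
  have -> : (1 / 2 : R) = expR (- ln 2) by rewrite expRN lnK ?posrE // div1r.
  rewrite ltr_expR; lra.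
case gx : (g x).
- have := decay HW A1G Hvv Hsv Hv1 (ltW a0) a1 (erefl q) q1 (j := k) (y := x).
  rewrite gx => /(_ erefl) H.
  have {}H : v x <= (1 - q) ^+ k.
    apply: H => z hz Hd; apply: Hnot; exists z; split => //.
    by rewrite gx; move: hz; case: (g z).
  apply/esym; rewrite /v in H; lra.
- have := decay HW A1G Hvu Hsu Hu1 (ltW a0) a1 (erefl q) q1 (j := k) (y := x).
  rewrite gx => /(_ erefl) H.
  have {}H : u x <= (1 - q) ^+ k.
    apply: H => z hz Hd; apply: Hnot; exists z; split => //.
    by rewrite gx hz.
  apply/esym/negbTE; rewrite -ltNge; lra.
Qed.
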